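(* Let $\beta\in\mathbb{R}^n_{>}$ and $\theta\in\Theta^\beta$, with agents indexed so that $v_1(\theta_1)\ge v_2(\theta_2)\ge\dots\ge v_n(\theta_n)$ (and $v_{n+1}(\theta_{n+1}):=0$). Then every efficient Nash equilibrium of $\mathbf{1}$-GSP for $\theta$ yields revenue at least $$\frac12\left(R(\theta)-\sum_{j=1}^{k}(\beta_j-\beta_{j+1})\cdot v_{j+1}(\theta_{j+1})\right).$$
   Context: Sponsored search setting: agents $N=\{1,\dots,n\}$, slots $1,\dots,k$ with $k\le n$; an outcome assigns agents to distinct positions, position $j\le k$ meaning slot $j$, others getting nothing (value 0); utilities quasilinear. $\mathbb{R}^n_{>}$: vectors $\beta$ with $1=\beta_1>\dots>\beta_k>0$ and $\beta_j=0$ for $j>k$ (so $\beta_{k+1}=0$). $\Theta^\beta$: type profiles in which agent $i$ has $v_i(\theta_i)\ge0$ and values slot $j$ at $\beta_j v_i(\theta_i)$. VCG outcome for $\theta$: the assignment and Clarke payments of the VCG mechanism (bids on every slot, bid-maximizing assignment) under truthful bids; $R(\theta)$ is its revenue. $\mathbf{1}$-GSP: each agent submits a single $b_i\ge0$ used as its bid on every slot; agents are ranked by $b_i$ (ties arbitrary), the rank-$j$ agent ($j\le k$) gets slot $j$ and pays the $(j+1)$-st highest submitted value ($0$ if none). Revenue = sum of payments. A Nash equilibrium (complete information, for $\theta$) is a profile of submissions from which no agent gains strictly by unilateral deviation; it is efficient if its assignment maximizes $\sum_i$ (true value of agent $i$ for its assigned slot). *)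

(* Defs.v *)
From mathcomp Require Import all_boot all_order all_algebra all_fingroup.
Set Implicit Arguments. Unset Strict Implicit. Unset Printing Implicit Defensive.
Import Order.TTheory GRing.Theory Num.Theory.
Local Open Scope ring_scope.

(* Agents are 'I_n (0-indexed), positions are 0-indexed ranks r : 'I_n;
   position r < k is slot r+1 of the paper.  A ranking s : {perm 'I_n}
   maps a rank to the agent occupying it. beta : nat -> R, beta r is the
   paper's beta_{r+1}. *)
Section Auction.
Variables (R : realFieldType) (n k : nat).

Definition pos (s : {perm 'I_n}) (i : 'I_n) : nat := s^-1%g i.

Definition beta_ok (beta : nat -> R) : Prop :=
  [/\ beta 0%N = 1,
      (forall j : nat, (j.+1 < k)%N -> beta j.+1 < beta j),
      0 < beta k.-1
    & (forall j : nat, (k <= j)%N -> beta j = 0)].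

(* value of the submission at rank r+1 (0 if there is none), i.e. the
   (r+2)-nd highest submitted value in 1-indexed terms *)
Definition next_bid (b : 'I_n -> R) (s : {perm 'I_n}) (r : nat) : R :=
  match (insub r.+1 : option 'I_n) with Some r' => b (s r') | None => 0 end.

Definition gsp_revenue (b : 'I_n -> R) (s : {perm 'I_n}) : R :=
  \sum_(r < n | (r < k)%N) next_bid b s r.

Definition gsp_utility (beta : nat -> R) (v : 'I_n -> R) (b : 'I_n -> R)
  (s : {perm 'I_n}) (i : 'I_n) : R :=
  if (pos s i < k)%N then beta (pos s i) * v i - next_bid b s (pos s i)
  else 0.

Definition consistent_ranking (b : 'I_n -> R) (s : {perm 'I_n}) : Prop :=
  forall r1 r2 : 'I_n, (r1 <= r2)%N -> b (s r2) <= b (s r1).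

Definition tie_rule (tb : ('I_n -> R) -> {perm 'I_n}) : Prop :=
  forall b, consistent_ranking b (tb b).

Definition upd (b : 'I_n -> R) (i : 'I_n) (x : R) : 'I_n -> R :=
  fun j => if j == i then x else b j.

Definition gsp_nash (beta : nat -> R) (v : 'I_n -> R)
  (tb : ('I_n -> R) -> {perm 'I_n}) (b : 'I_n -> R) : Prop :=
  (forall i, 0 <= b i) /\
  (forall (i : 'I_n) (x : R), 0 <= x ->
     gsp_utility beta v (upd b i x) (tb (upd b i x)) i
       <= gsp_utility beta v b (tb b) i).

Definition welfare (beta : nat -> R) (v : 'I_n -> R) (s : {perm 'I_n}) : R :=
  \sum_(i : 'I_n) beta (pos s i) * v i.

Definition efficient (beta : nat -> R) (v : 'I_n -> R) (s : {perm 'I_n}) : Prop :=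
  forall t : {perm 'I_n}, welfare beta v t <= welfare beta v s.

(* VCG with Clarke payments (truthful bids) *)
Definition welfare_others (beta : nat -> R) (v : 'I_n -> R)
  (s : {perm 'I_n}) (i : 'I_n) : R :=
  \sum_(a : 'I_n | a != i) beta (pos s a) * v a.

(* optimal welfare of the economy without agent i (all terms are >= 0) *)
Definition opt_without (beta : nat -> R) (v : 'I_n -> R) (i : 'I_n) : R :=
  \big[Num.max/0]_(s : {perm 'I_n}) welfare_others beta v s i.

Definition clarke_payment (beta : nat -> R) (v : 'I_n -> R)
  (s : {perm 'I_n}) (i : 'I_n) : R :=
  opt_without beta v i - welfare_others beta v s i.

Definition vcg_revenue (beta : nat -> R) (v : 'I_n -> R) (s : {perm 'I_n}) : R :=
  \sum_(i : 'I_n) clarke_payment beta v s i.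

(* v extended by 0 beyond agent n (paper's v_{n+1} := 0) *)
Definition vext (v : 'I_n -> R) (m : nat) : R :=
  match (insub m : option 'I_n) with Some i => v i | None => 0 end.

End Auction.

(* Main.v *)
Require Import Defs.
From mathcomp Require Import all_boot all_order all_algebra all_fingroup.
From mathcomp Require Import zify ring lra.
Import Order.TTheory GRing.Theory Num.Theory.
Set Implicit Arguments. Unset Strict Implicit. Unset Printing Implicit Defensive.
Local Open Scope ring_scope.

Lemma beta_mono (R : realFieldType) (k : nat) (beta : nat -> R) :
  beta_ok k beta -> forall p q : nat, (p <= q)%N -> beta q <= beta p.
Proof.
case=> b0 bdec bpos bz.
have hle : forall d p, (p + d < k)%N -> beta (p + d)%N <= beta p.
  elim=> [|d IH] p h; first by rewrite addn0.
  apply: le_trans (IH p _); last by lia.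
  rewrite addnS; apply/ltW/bdec; by rewrite -addnS.
have hge : forall p, (p < k)%N -> 0 < beta p.
  move=> p hp; apply: lt_le_trans bpos _.
  have e : (p + (k.-1 - p) = k.-1)%N by lia.
  have := hle (k.-1 - p)%N p; rewrite e; apply; lia.
move=> p q hpq.
case: (ltnP q k) => hq.
- have e : (p + (q - p) = q)%N by lia.
  have := hle (q - p)%N p; rewrite e; apply; lia.
- rewrite (bz q hq). case: (ltnP p k) => hp; [exact/ltW/hge | by rewrite bz].
Qed.

Lemma beta_strict (R : realFieldType) (k : nat) (beta : nat -> R) :
  beta_ok k beta -> forall p q : nat, (p < q)%N -> (p < k)%N -> beta q < beta p.
Proof.
move=> hb p q hpq hpk. have [b0 bdec bpos bz] := hb.
have h1 := beta_mono hb hpq. apply: (le_lt_trans h1).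
case: (ltnP p.+1 k) => h; first exact: bdec.
rewrite (bz _ h). have -> : p = k.-1 by lia. done.
Qed.

Lemma card_ltset (n m : nat) : #|[set a : 'I_n | (a < m)%N]| = minn m n.
Proof.
elim: m => [|m IH].
  rewrite min0n; apply/eqP; rewrite cards_eq0; apply/eqP/setP=> a; by rewrite !inE.
case: (ltnP m n) => hm.
- have -> : [set a : 'I_n | (a < m.+1)%N] = (Ordinal hm) |: [set a : 'I_n | (a < m)%N].
    apply/setP=> a; rewrite !inE ltnS leq_eqVlt. done.
  rewrite cardsU1 IH inE /= ltnn /=. lia.
- have -> : [set a : 'I_n | (a < m.+1)%N] = [set a : 'I_n | (a < m)%N].
    apply/setP=> a; rewrite !inE. have := ltn_ord a. lia.
  rewrite IH. lia.
Qed.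

Lemma card_pos_lt (n m : nat) (s : {perm 'I_n}) :
  #|[set a : 'I_n | (pos s a < m)%N]| = minn m n.
Proof.
have -> : [set a : 'I_n | (pos s a < m)%N] = (s^-1)%g @^-1: [set r : 'I_n | (r < m)%N].
  by apply/setP=> a; rewrite !inE.
by rewrite card_preimset ?card_ltset //; apply: perm_inj.
Qed.

Lemma pigeon (n : nat) (s : {perm 'I_n}) (r : nat) : (r < n)%N ->
  exists a : 'I_n, (a <= r)%N /\ (r <= pos s a)%N.
Proof.
move=> hr.
case: (boolP [exists a : 'I_n, (a <= r)%N && (r <= pos s a)%N]) =>
  [/existsP [a /andP [h1 h2]]|/existsPn H]; first by exists a.
have sub : [set a : 'I_n | (a < r.+1)%N] \subset [set a | (pos s a < r)%N].
  apply/subsetP=> a; rewrite !inE ltnS => ha.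
  by have := H a; rewrite ha /= -ltnNge.
have := subset_leq_card sub; rewrite card_ltset card_pos_lt. lia.
Qed.

Lemma exch (R : realFieldType) (T : finType) (f : T -> R) (A B : {set T}) :
  (forall x, 0 <= f x) -> (#|A| <= #|B|)%N ->
  (forall x y, x \notin B -> y \in B -> f x <= f y) ->
  \sum_(x in A) f x <= \sum_(x in B) f x.
Proof.
move=> f0 hc hxy.
rewrite (big_setID B) [X in _ <= X](big_setID A) setIC lerD2l.
have hc' : (#|A :\: B| <= #|B :\: A|)%N.
  have := cardsID B A; have := cardsID A B; rewrite setIC. lia.
have S2 : 0 <= \sum_(y in B :\: A) f y by apply: sumr_ge0 => *; exact: f0.
have key : (\sum_(x in A :\: B) f x) * #|B :\: A|%:R <=
           (\sum_(y in B :\: A) f y) * #|A :\: B|%:R.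
  have e1 : (\sum_(x in A :\: B) f x) * #|B :\: A|%:R =
      \sum_(x in A :\: B) \sum_(y in B :\: A) f x.
    rewrite mulr_suml; apply: eq_bigr => x _; by rewrite sumr_const mulr_natr.
  have e2 : (\sum_(y in B :\: A) f y) * #|A :\: B|%:R =
      \sum_(x in A :\: B) \sum_(y in B :\: A) f y.
    rewrite exchange_big /= mulr_suml; apply: eq_bigr => y _; by rewrite sumr_const mulr_natr.
  rewrite e1 e2; apply: ler_sum => x; rewrite inE => /andP [hx _].
  apply: ler_sum => y; rewrite inE => /andP [_ hy]. exact: hxy.
case: (posnP #|B :\: A|) => h0.
  have : #|A :\: B| = 0%N by lia.
  move/eqP; rewrite cards_eq0 => /eqP ->. by rewrite big_set0.
have hN : (#|A :\: B|%:R <= #|B :\: A|%:R :> R) by rewrite ler_nat.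
have hP : (0 < #|B :\: A|%:R :> R) by rewrite ltr0n.
nra.
Qed.

Lemma vextE (R : realFieldType) n (v : 'I_n -> R) m (h : (m < n)%N) :
  vext v m = v (Ordinal h).
Proof. by rewrite /vext insubT. Qed.

Lemma vext0 (R : realFieldType) n (v : 'I_n -> R) m : (n <= m)%N -> vext v m = 0.
Proof. by move=> h; rewrite /vext insubF // ltnNge h. Qed.

Definition top (R : realFieldType) n (v : 'I_n -> R) (m : nat) : R :=
  \sum_(a in [set a : 'I_n | (a < m)%N]) v a.

Lemma top_bound (R : realFieldType) n (v : 'I_n -> R) (hv0 : forall i, 0 <= v i)
  (hs : forall i j : 'I_n, (i <= j)%N -> v j <= v i)
  (A : {set 'I_n}) m : (#|A| <= m)%N -> \sum_(a in A) v a <= top v m.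
Proof.
move=> hA; apply: exch => //.
- rewrite card_ltset. have := max_card A; rewrite card_ord. lia.
- move=> x y; rewrite !inE -leqNgt => hx hy; apply: hs; lia.
Qed.

Lemma top_succ (R : realFieldType) n (v : 'I_n -> R) m : top v m.+1 = top v m + vext v m.
Proof.
rewrite /top; case: (ltnP m n) => hm.
- rewrite (vextE v hm).
  have -> : [set a : 'I_n | (a < m.+1)%N] = (Ordinal hm) |: [set a : 'I_n | (a < m)%N].
    apply/setP=> a; rewrite !inE ltnS leq_eqVlt. done.
  by rewrite big_setU1 ?inE /= ?ltnn // addrC.
- rewrite vext0 // addr0.
  have -> : [set a : 'I_n | (a < m.+1)%N] = [set a : 'I_n | (a < m)%N].
    apply/setP=> a; rewrite !inE. have := ltn_ord a. lia.
  done.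
Qed.

Lemma welfare_rank (R : realFieldType) n (beta : nat -> R) (v : 'I_n -> R) (s : {perm 'I_n}) :
  welfare beta v s = \sum_(r : 'I_n) beta r * v (s r).
Proof.
rewrite /welfare (reindex_inj (@perm_inj _ s)) /=; apply: eq_bigr => r _.
by rewrite /pos permK.
Qed.

Lemma sum_tperm (R : realFieldType) n (F : 'I_n -> 'I_n -> R) (r p : 'I_n) : r != p ->
  \sum_x F x (tperm r p x) = \sum_x F x x + (F r p + F p r - F r r - F p p).
Proof.
move=> hrp.
rewrite (bigD1 r) // (bigD1 p) 1?eq_sym //= [in RHS](bigD1 r) // [in RHS](bigD1 p) 1?eq_sym //=.
rewrite tpermL tpermR.
have -> : \sum_(i | (i != r) && (i != p)) F i (tperm r p i) =
          \sum_(i | (i != r) && (i != p)) F i i.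
  apply: eq_bigr => i /andP [h1 h2]; by rewrite tpermD // eq_sym.
ring.
Qed.

Lemma eff_sorted (R : realFieldType) n k (beta : nat -> R) (v : 'I_n -> R)
  (hb : beta_ok k beta) (hs : forall i j : 'I_n, (i <= j)%N -> v j <= v i)
  (s : {perm 'I_n}) (he : efficient beta v s) (r : 'I_n) :
  (r < k)%N -> v r <= v (s r).
Proof.
move=> hrk. rewrite leNgt; apply/negP => hlt.
have [a [har hra]] := pigeon s (ltn_ord r).
have hva : v r <= v a by apply: hs.
set p := (s^-1)%g a.
have hsp : s p = a by rewrite /p permKV.
have hne : r != p.
  apply/eqP => e. move: hlt hva; rewrite e hsp. lra.
have hrp : (r < p)%N.
  rewrite ltn_neqAle; apply/andP; split => //.
have hbp : beta p < beta r := beta_strict hb hrp hrk.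
have := he (tperm r p * s)%g. rewrite !welfare_rank.
have -> : \sum_(r0 : 'I_n) beta r0 * v ((tperm r p * s)%g r0) =
          \sum_(x : 'I_n) beta x * v (s (tperm r p x)).
  by apply: eq_bigr => x _; rewrite permM.
rewrite (sum_tperm (fun x y => beta x * v (s y))) //= hsp.
nra.
Qed.

Definition bidl (R : realFieldType) n (b : 'I_n -> R) (s : {perm 'I_n}) (l : nat) : R :=
  match (insub l : option 'I_n) with Some l' => b (s l') | None => 0 end.

Lemma bidlE (R : realFieldType) n (b : 'I_n -> R) s l (h : (l < n)%N) :
  bidl b s l = b (s (Ordinal h)).
Proof. by rewrite /bidl insubT. Qed.

Lemma bidl0 (R : realFieldType) n (b : 'I_n -> R) s l : (n <= l)%N -> bidl b s l = 0.
Proof. by move=> h; rewrite /bidl insubF // ltnNge h. Qed.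

Lemma bidl_ge0 (R : realFieldType) n (b : 'I_n -> R) s l :
  (forall i, 0 <= b i) -> 0 <= bidl b s l.
Proof. by move=> h; rewrite /bidl; case: insub. Qed.

Lemma dev (R : realFieldType) n k (beta : nat -> R) (v : 'I_n -> R) tb b
  (hb : beta_ok k beta) (hv0 : forall i, 0 <= v i)
  (htb : tie_rule tb) (hne : gsp_nash k beta v tb b) (j l : 'I_n) :
  (l < pos (tb b) j)%N -> (l < k)%N ->
  beta l * v j - b (tb b l) <= gsp_utility k beta v b (tb b) j.
Proof.
move=> hlj hlk. have [hb0 hN] := hne.
apply/ler_addgt0Pr => e he.
set x := b (tb b l) + e.
have hx0 : 0 <= x by have := hb0 (tb b l); rewrite /x; lra.
have hdev := hN j x hx0.
set b' := upd b j x in hdev. set s' := tb b' in hdev.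
have hc' := htb b'.
have hml : (pos s' j <= l)%N.
  have sub : [set a : 'I_n | (pos s' a < pos s' j)%N] \subset [set a | (pos (tb b) a < l)%N].
    apply/subsetP => a; rewrite !inE => ha.
    have haj : a != j by apply/eqP => e'; move: ha; rewrite e' ltnn.
    have hba : x <= b a.
      have := hc' ((s'^-1)%g a) ((s'^-1)%g j) (ltnW ha).
      by rewrite !permKV /b' /upd eqxx (negbTE haj).
    rewrite ltnNge; apply/negP => hla.
    have := htb b l ((tb b)^-1%g a) hla; rewrite permKV. move: hba. rewrite /x. lra.
  have := subset_leq_card sub; rewrite !card_pos_lt.
  have := ltn_ord ((s'^-1)%g j). rewrite /pos. lia.
have hmk : (pos s' j < k)%N by lia.
have hu' : beta l * v j - x <= gsp_utility k beta v b' s' j.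
  rewrite /gsp_utility hmk.
  have hnb : next_bid b' s' (pos s' j) <= x.
    rewrite /next_bid. case: insubP => [r' _ hr'|_]; last lra.
    have := hc' ((s'^-1)%g j) r'. rewrite hr' /pos => /(_ (leqnSn _)).
    by rewrite permKV /b' /upd eqxx.
  have hbm : beta l <= beta (pos s' j) := beta_mono hb hml.
  have := hv0 j. nra.
move: hdev hu'. rewrite /x. lra.
Qed.

Definition cc (R : realFieldType) n (beta : nat -> R) (v : 'I_n -> R) (p : nat) : R :=
  (beta p - beta p.+1) * vext v p.+1.

Definition SS (R : realFieldType) n k (beta : nat -> R) (v : 'I_n -> R) (l : nat) : R :=
  \sum_(l <= p < k) (if ~~ odd (p - l) then cc beta v p else 0).

Lemma SS_ge (R : realFieldType) n k (beta : nat -> R) (v : 'I_n -> R) l :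
  (k <= l)%N -> SS k beta v l = 0.
Proof. by move=> h; rewrite /SS big_geq. Qed.

Lemma SS_rec (R : realFieldType) n k (beta : nat -> R) (v : 'I_n -> R) l :
  (l < k)%N -> SS k beta v l = cc beta v l + SS k beta v l.+2.
Proof.
move=> hl. rewrite /SS big_ltn // subnn /=.
case: (ltnP l.+1 k) => h1.
- rewrite big_ltn // subSnn /= add0r.
  congr (_ + _). apply: eq_big_nat => p /andP [hp _].
  have -> : (p - l = (p - l.+2).+2)%N by lia. by rewrite /= negbK.
- rewrite big_geq // big_geq; [by rewrite addr0|lia].
Qed.

Lemma SS_pair (R : realFieldType) n k (beta : nat -> R) (v : 'I_n -> R) l :
  SS k beta v l + SS k beta v l.+1 = \sum_(l <= p < k) cc beta v p.
Proof.
case: (ltnP l k) => hl.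
- rewrite [in LHS]/SS big_ltn // subnn /= [in RHS]big_ltn // -addrA; congr (_ + _).
  rewrite /SS -big_split /=; apply: eq_big_nat => p /andP [hp _].
  have -> : (p - l = (p - l.+1).+1)%N by lia. rewrite /=.
  by case: odd; rewrite ?add0r ?addr0.
- rewrite /SS !big_geq ?addr0 //; lia.
Qed.

Lemma key (R : realFieldType) (n k : nat) (beta : nat -> R) (v : 'I_n -> R)
  (hk : (0 < k)%N) (hkn : (k <= n)%N) (hb : beta_ok k beta)
  (hv0 : forall i, 0 <= v i)
  (hsorted : forall i j : 'I_n, (i <= j)%N -> v j <= v i)
  (tb : ('I_n -> R) -> {perm 'I_n}) (htb : tie_rule tb)
  (b : 'I_n -> R) (hne : gsp_nash k beta v tb b)
  (heff : efficient beta v (tb b)) :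
  forall l, SS k beta v l <= bidl b (tb b) l.
Proof.
have hb0 := hne.1.
suff H : forall d l, (k - l <= d)%N -> SS k beta v l <= bidl b (tb b) l.
  by move=> l; exact: (H _ l (leqnn _)).
elim=> [|d IH] l hd.
  rewrite SS_ge; [exact: bidl_ge0 | lia].
case: (ltnP l k) => hlk; last by rewrite SS_ge //; exact: bidl_ge0.
have hln : (l < n)%N by lia.
rewrite SS_rec //.
have hbm : beta l.+1 <= beta l := beta_mono hb (leqnSn l).
case: (ltnP l.+1 k) => h1.
- have hl1n : (l.+1 < n)%N by lia.
  have IH2 := IH l.+2 ltac:(lia).
  set j := tb b (Ordinal hl1n).
  have hpj : pos (tb b) j = l.+1 by rewrite /pos /j permK.
  have hdv := dev hb hv0 htb hne (j:=j) (l:=Ordinal hln).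
  rewrite hpj /= in hdv. have {hdv} hdv := hdv (leqnn _) hlk.
  have hu : gsp_utility k beta v b (tb b) j = beta l.+1 * v j - bidl b (tb b) l.+2.
    by rewrite /gsp_utility hpj h1.
  have hvj : vext v l.+1 <= v j.
    rewrite (vextE v hl1n) /j. have := eff_sorted hb hsorted heff (r:=Ordinal hl1n) h1. done.
  move: hdv; rewrite hu (bidlE b (tb b) hln) /cc => hdv.
  have := hv0 j. nra.
- rewrite [SS k beta v l.+2]SS_ge; last lia. rewrite addr0 /cc.
  have hk1 : beta l.+1 = 0 by case: hb => _ _ _ bz; apply: bz.
  case: (ltnP l.+1 n) => h2.
  + have [a [ha1 ha2]] := pigeon (tb b) h2.
    have hdv := dev hb hv0 htb hne (j:=a) (l:=Ordinal hln) ha2 hlk.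
    have hu : gsp_utility k beta v b (tb b) a = 0.
      by rewrite /gsp_utility ifF //; apply/negbTE; rewrite -leqNgt; lia.
    have hva : vext v l.+1 <= v a by rewrite (vextE v h2); apply: hsorted.
    move: hdv; rewrite hu (bidlE b (tb b) hln) hk1 => hdv.
    rewrite hk1 in hbm. nra.
  + rewrite vext0 // mulr0. exact: bidl_ge0.
Qed.

Lemma dbl (R : realFieldType) (f : nat -> R) K :
  \sum_(r < K) \sum_(r.+1 <= p < K) f p = \sum_(p < K) p%:R * f p.
Proof.
elim: K => [|K IH]; first by rewrite !big_ord0.
rewrite big_ord_recr /= big_geq // addr0.
have -> : \sum_(r < K) \sum_(r.+1 <= p < K.+1) f p =
          \sum_(r < K) (\sum_(r.+1 <= p < K) f p + f K).
  by apply: eq_bigr => r _; rewrite big_nat_recr.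
by rewrite big_split /= IH sumr_const card_ord [in RHS]big_ord_recr /= mulr_natl.
Qed.

Lemma vext_ge0 (R : realFieldType) n (v : 'I_n -> R) m :
  (forall i, 0 <= v i) -> 0 <= vext v m.
Proof. by move=> h; rewrite /vext; case: insub. Qed.

Lemma rev_bound (R : realFieldType) (n k : nat) (beta : nat -> R) (v : 'I_n -> R)
  (hk : (0 < k)%N) (hkn : (k <= n)%N) (hb : beta_ok k beta)
  (hv0 : forall i, 0 <= v i)
  (hsorted : forall i j : 'I_n, (i <= j)%N -> v j <= v i)
  (tb : ('I_n -> R) -> {perm 'I_n}) (htb : tie_rule tb)
  (b : 'I_n -> R) (hne : gsp_nash k beta v tb b)
  (heff : efficient beta v (tb b)) :
  \sum_(j < k) (j%:R * cc beta v j) <= 2 * gsp_revenue k b (tb b).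
Proof.
have hc0 : forall p, 0 <= cc beta v p.
  move=> p; rewrite /cc; apply: mulr_ge0; last exact: vext_ge0.
  rewrite subr_ge0; have := beta_mono hb (leqnSn p); done.
have hS0 : forall l, 0 <= SS k beta v l.
  move=> l; rewrite /SS; apply: sumr_ge0 => p _; by case: ifP.
have hrev : \sum_(r < k) SS k beta v r.+1 <= gsp_revenue k b (tb b).
  rewrite /gsp_revenue -(big_ord_widen n (fun r => next_bid b (tb b) r) hkn).
  apply: ler_sum => r _.
  exact: (key hk hkn hb hv0 hsorted htb hne heff).
have e1 : \sum_(j < k) (j%:R * cc beta v j) =
          \sum_(r < k) (SS k beta v r.+1 + SS k beta v r.+2).
  rewrite -dbl; apply: eq_bigr => r _; by rewrite SS_pair.
have e2 : SS k beta v 1 + \sum_(i < k) SS k beta v i.+2 =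
          \sum_(i < k) SS k beta v i.+1 + SS k beta v k.+1.
  rewrite -(big_ord_recr k (fun i : 'I_k.+1 => SS k beta v i.+1)).
  by rewrite (big_ord_recl k (fun i : 'I_k.+1 => SS k beta v i.+1)).
have e3 : SS k beta v k.+1 = 0 by rewrite SS_ge.
have := hS0 1%N.
rewrite e1 big_split /=.
lra.
Qed.

Lemma beta_ge0 (R : realFieldType) k (beta : nat -> R) :
  beta_ok k beta -> forall p, 0 <= beta p.
Proof.
move=> hb p. have := beta_mono hb (leq_addr k p).
by case: hb => _ _ _ bz; rewrite bz // leq_addl.
Qed.

Lemma beta_abel (R : realFieldType) k (beta : nat -> R) :
  beta_ok k beta -> forall p : nat,
  beta p = \sum_(q < k) (if (p <= q)%N then beta q - beta q.+1 else 0).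
Proof.
move=> hb p. have [_ _ _ bz] := hb.
case: (ltnP p k) => hp.
- rewrite -(big_mkord xpredT (fun q => if (p <= q)%N then beta q - beta q.+1 else 0)).
  rewrite (big_cat_nat (leq0n p) (ltnW hp)) /=.
  rewrite big_nat_cond big1; last first.
    by move=> q /andP [/andP [_ hq] _]; rewrite leqNgt hq.
  rewrite add0r.
  have -> : \sum_(p <= i < k) (if (p <= i)%N then beta i - beta i.+1 else 0) =
            - \sum_(p <= i < k) (beta i.+1 - beta i).
    rewrite -sumrN; apply: eq_big_nat => q /andP [hq _]; by rewrite hq opprB.
  rewrite telescope_sumr ?(ltnW hp) // (bz k) //. by rewrite sub0r opprK.
- rewrite bz // big1 // => q _. have := ltn_ord q. case: ifP => //; lia.
Qed.

Lemma abel_sum (R : realFieldType) n k (beta : nat -> R) (hb : beta_ok k beta)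
  (P : pred 'I_n) (g : 'I_n -> nat) (f : 'I_n -> R) :
  \sum_(a | P a) beta (g a) * f a =
  \sum_(q < k) (beta q - beta q.+1) *
     \sum_(a in [set a | P a && (g a <= q)%N]) f a.
Proof.
under eq_bigr => a _ do rewrite (beta_abel hb (g a)) mulr_suml.
rewrite exchange_big /=; apply: eq_bigr => q _.
rewrite mulr_sumr big_mkcond [in RHS]big_mkcond; apply: eq_bigr => a _.
rewrite inE. case: (P a) => /=; last by [].
by case: ifP => _; rewrite ?mul0r ?mulr0.
Qed.

Definition UU (R : realFieldType) n (v : 'I_n -> R) (i : 'I_n) (m : nat) : R :=
  if (i < m)%N then top v m.+1 - v i else top v m.

Lemma U_bound (R : realFieldType) n (v : 'I_n -> R) (hv0 : forall i, 0 <= v i)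
  (hs : forall i j : 'I_n, (i <= j)%N -> v j <= v i)
  (i : 'I_n) (A : {set 'I_n}) m : i \notin A -> (#|A| <= m)%N ->
  \sum_(a in A) v a <= UU v i m.
Proof.
move=> hi hA; rewrite /UU; case: ifP => _; last exact: top_bound.
have := top_bound hv0 hs (A := i |: A) (m := m.+1).
rewrite cardsU1 hi big_setU1 //=. move/(_ hA). lra.
Qed.

Lemma WO_bound (R : realFieldType) n k (beta : nat -> R) (v : 'I_n -> R)
  (hb : beta_ok k beta) (hv0 : forall i, 0 <= v i)
  (hs : forall i j : 'I_n, (i <= j)%N -> v j <= v i)
  (s : {perm 'I_n}) (i : 'I_n) :
  welfare_others beta v s i <= \sum_(q < k) (beta q - beta q.+1) * UU v i q.+1.
Proof.
rewrite /welfare_others (abel_sum hb (fun a => a != i) (pos s) v).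
apply: ler_sum => q _. apply: ler_wpM2l.
  rewrite subr_ge0; exact: (beta_mono hb (leqnSn q)).
apply: U_bound => //; first by rewrite inE eqxx.
have sub : [set a | (a != i) && (pos s a <= q)%N] \subset [set a | (pos s a < q.+1)%N].
  by apply/subsetP => a; rewrite !inE ltnS => /andP [].
apply: leq_trans (subset_leq_card sub) _; by rewrite card_pos_lt geq_minl.
Qed.

Lemma sumU (R : realFieldType) n (v : 'I_n -> R) m : (m <= n)%N ->
  \sum_(i : 'I_n) UU v i m = n%:R * top v m - top v m + m%:R * vext v m.
Proof.
move=> hm.
have -> : \sum_(i : 'I_n) UU v i m =
  \sum_(i : 'I_n) (top v m + (if (i < m)%N then vext v m - v i else 0)).
  apply: eq_bigr => i _; rewrite /UU top_succ; case: ifP => _; [ring | by rewrite addr0].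
rewrite big_split /= sumr_const card_ord.
have -> : \sum_(i : 'I_n) (if (i < m)%N then vext v m - v i else 0) =
          \sum_(i in [set i : 'I_n | (i < m)%N]) (vext v m - v i).
  by rewrite [in RHS]big_mkcond; apply: eq_bigr => i _; rewrite inE.
rewrite sumrB sumr_const card_ltset -/(top v m).
have -> : minn m n = m by lia.
rewrite mulr_natl [m%:R * _]mulr_natl addrA [X in _ = X]addrAC. done.
Qed.

Lemma vcg_bound (R : realFieldType) (n k : nat) (beta : nat -> R) (v : 'I_n -> R)
  (hk : (0 < k)%N) (hkn : (k <= n)%N) (hb : beta_ok k beta)
  (hv0 : forall i, 0 <= v i)
  (hsorted : forall i j : 'I_n, (i <= j)%N -> v j <= v i)
  (svcg : {perm 'I_n}) (hvcg : efficient beta v svcg) :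
  vcg_revenue beta v svcg <= \sum_(q < k) (q.+1)%:R * cc beta v q.
Proof.
set W := welfare beta v svcg.
set w := fun q : nat => beta q - beta q.+1.
set Ws := \sum_(q < k) w q * top v q.+1.
have hbg := beta_ge0 hb.
have hWs : Ws <= W.
  have := hvcg 1%g. rewrite /W !welfare_rank.
  have -> : \sum_(r : 'I_n) beta r * v ((1 : {perm 'I_n})%g r) = Ws.
    under eq_bigr => r _ do rewrite perm1.
    rewrite (abel_sum hb xpredT (@nat_of_ord n) v) /Ws.
    apply: eq_bigr => q _. congr (_ * _).
  done.
have hWO : \sum_(i : 'I_n) welfare_others beta v svcg i = n%:R * W - W.
  have -> : \sum_(i : 'I_n) welfare_others beta v svcg i =
            \sum_(i : 'I_n) (W - beta (pos svcg i) * v i).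
    apply: eq_bigr => i _. rewrite /W /welfare /welfare_others [in RHS](bigD1 i) //=. ring.
  by rewrite sumrB sumr_const card_ord -/(welfare beta v svcg) -/W mulr_natl.
set V := fun i : 'I_n => \sum_(q < k) w q * UU v i q.+1.
have hOW : forall i, opt_without beta v i <= V i.
  move=> i. rewrite /opt_without. apply: bigmax_le => [|s _].
  - apply: le_trans (WO_bound hb hv0 hsorted 1%g i).
    rewrite /welfare_others; apply: sumr_ge0 => a _; apply: mulr_ge0 => //.
  - exact: (WO_bound hb hv0 hsorted s i).
have hV : \sum_(i : 'I_n) V i =
          \sum_(q < k) w q * (n%:R * top v q.+1 - top v q.+1 + (q.+1)%:R * vext v q.+1).
  rewrite /V exchange_big /=; apply: eq_bigr => q _.
  rewrite -mulr_sumr sumU //. have := ltn_ord q. lia.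
have hR : vcg_revenue beta v svcg <= \sum_(i : 'I_n) V i - (n%:R * W - W).
  rewrite /vcg_revenue /clarke_payment sumrB -hWO lerD2r.
  by apply: ler_sum => i _; exact: hOW.
have hn : (1 <= n%:R :> R) by rewrite ler1n; lia.
have hfin : \sum_(i : 'I_n) V i - (n%:R * Ws - Ws) = \sum_(q < k) (q.+1)%:R * cc beta v q.
  rewrite hV /Ws mulr_sumr -sumrB -sumrB; apply: eq_bigr => q _.
  rewrite /cc /w -natr1. ring.
rewrite -hfin. apply: le_trans hR _. nra.
Qed.

Theorem theorem2 (R : realFieldType) (n k : nat) (beta : nat -> R)
  (v : 'I_n -> R)
  (hk : (0 < k)%N) (hkn : (k <= n)%N)
  (hbeta : beta_ok k beta)
  (hv0 : forall i, 0 <= v i)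
  (hsorted : forall i j : 'I_n, (i <= j)%N -> v j <= v i)
  (svcg : {perm 'I_n}) (hvcg : efficient beta v svcg)
  (tb : ('I_n -> R) -> {perm 'I_n}) (htb : tie_rule tb)
  (b : 'I_n -> R) (hne : gsp_nash k beta v tb b)
  (heff : efficient beta v (tb b)) :
  (vcg_revenue beta v svcg
     - \sum_(j < k) (beta j - beta j.+1) * vext v j.+1) / 2
    <= gsp_revenue k b (tb b).
Proof.
have h1 := rev_bound hk hkn hbeta hv0 hsorted htb hne heff.
have h2 := vcg_bound hk hkn hbeta hv0 hsorted hvcg.
have e : \sum_(q < k) (q.+1)%:R * cc beta v q =
         \sum_(q < k) q%:R * cc beta v q + \sum_(j < k) (beta j - beta j.+1) * vext v j.+1.
  rewrite -big_split /=; apply: eq_bigr => q _; rewrite /cc -natr1; ring.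
rewrite e in h2. lra.
Qed.
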